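(* A group $G$ is isomorphic to an automaton group if and only if $G$ is isomorphic to an expanding automaton semigroup. Likewise, a group $G$ is isomorphic to a self-similar group if and only if $G$ is isomorphic to an expanding self-similar semigroup.
   Context: An expanding automaton is a quadruple $(Q,\Sigma,t,o)$ with $Q$ a set of states, $\Sigma$ a finite alphabet, $t:Q\times\Sigma\to Q$ and $o:Q\times\Sigma\to\Sigma^+$; a synchronous automaton has $o:Q\times\Sigma\to\Sigma$, and it is invertible if for each $q$ the map $\sigma\mapsto o(q,\sigma)$ is a permutation of $\Sigma$. Each state $q$ induces $q:\Sigma^*\to\Sigma^*$ by $q(\emptyset)=\emptyset$, $q(\sigma w)=o(q,\sigma)\,q'(w)$ with $q'=t(q,\sigma)$. An expanding automaton semigroup is the semigroup of maps generated under composition by the states of an expanding automaton with finitely many states; an expanding self-similar semigroup is the same allowing infinitely many states. An automaton group is the group generated by the states of a finite-state invertible synchronous automaton (the states act as bijections); a self-similar group is the group generated by the states of an invertible synchronous automaton with possibly infinitely many states. *)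

(* Defs.v *)
From mathcomp Require Import all_boot.
Set Implicit Arguments. Unset Strict Implicit. Unset Printing Implicit Defensive.

Definition is_group (G : Type) (mul : G -> G -> G) (one : G) (inv : G -> G) :=
  [/\ forall x y z, mul x (mul y z) = mul (mul x y) z,
      forall x, mul one x = x &
      forall x, mul (inv x) x = one].

Fixpoint exp_act (Q : Type) (S : Type) (t : Q -> S -> Q) (o : Q -> S -> seq S)
    (q : Q) (w : seq S) : seq S :=
  match w with
  | [::] => [::]
  | s :: w' => o q s ++ exp_act t o (t q s) w'
  end.

Definition sync_act (Q : Type) (S : Type) (t : Q -> S -> Q) (o : Q -> S -> S)
    (q : Q) (w : seq S) : seq S :=
  exp_act t (fun q s => [:: o q s]) q w.

Inductive sgen (A : Type) (gens : (A -> A) -> Prop) : (A -> A) -> Prop :=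
  | sgen_base f : gens f -> sgen gens f
  | sgen_comp f g : sgen gens f -> sgen gens g -> sgen gens (f \o g)
  | sgen_ext f g : sgen gens f -> f =1 g -> sgen gens g.

Inductive ggen (A : Type) (gens : (A -> A) -> Prop) : (A -> A) -> Prop :=
  | ggen_base f : gens f -> ggen gens f
  | ggen_id : ggen gens id
  | ggen_comp f g : ggen gens f -> ggen gens g -> ggen gens (f \o g)
  | ggen_inv f g : ggen gens f -> cancel f g -> cancel g f -> ggen gens g
  | ggen_ext f g : ggen gens f -> f =1 g -> ggen gens g.

Definition iso_to_maps (G : Type) (mul : G -> G -> G) (A : Type)
    (M : (A -> A) -> Prop) : Prop :=
  exists phi : G -> (A -> A),
    [/\ forall g, M (phi g),
        forall f, M f -> exists g, phi g =1 f,
        forall g h, phi g =1 phi h -> g = h &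
        forall g h, phi (mul g h) =1 (phi g \o phi h)].

Definition iso_automaton_group (G : Type) (mul : G -> G -> G) : Prop :=
  exists (S : finType) (Q : finType) (t : Q -> S -> Q) (o : Q -> S -> S),
    (forall q, bijective (o q)) /\
    iso_to_maps mul (ggen (fun f => exists q, f = sync_act t o q)).

Definition iso_self_similar_group (G : Type) (mul : G -> G -> G) : Prop :=
  exists (S : finType) (Q : Type) (t : Q -> S -> Q) (o : Q -> S -> S),
    (forall q, bijective (o q)) /\
    iso_to_maps mul (ggen (fun f => exists q, f = sync_act t o q)).

Definition iso_expanding_automaton_semigroup (G : Type) (mul : G -> G -> G) : Prop :=
  exists (S : finType) (Q : finType) (t : Q -> S -> Q) (o : Q -> S -> seq S),
    (forall q s, o q s <> [::]) /\
    iso_to_maps mul (sgen (fun f => exists q, f = exp_act t o q)).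

Definition iso_expanding_self_similar_semigroup (G : Type) (mul : G -> G -> G) : Prop :=
  exists (S : finType) (Q : Type) (t : Q -> S -> Q) (o : Q -> S -> seq S),
    (forall q s, o q s <> [::]) /\
    iso_to_maps mul (sgen (fun f => exists q, f = exp_act t o q)).

(* Main.v *)
Require Import Defs.
From mathcomp Require Import all_boot.
Set Implicit Arguments. Unset Strict Implicit. Unset Printing Implicit Defensive.

Lemma iso_transfer (G : Type) (mul : G -> G -> G) (A : Type) (M M' : (A -> A) -> Prop) :
  (forall f, M f -> M' f) -> (forall f, M' f -> M f) ->
  iso_to_maps mul M -> iso_to_maps mul M'.
Proof.
move=> h1 h2 [phi [p1 p2 p3 p4]]; exists phi; split => //.
- by move=> g; apply: h1.
- by move=> f /h2; apply: p2.
Qed.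

Definition oi (S : finType) (Q : Type) (o : Q -> S -> S) q s := odflt s [pick x | o q x == s].

Definition tE (S : finType) (Q : Type) (t : Q -> S -> Q) (o : Q -> S -> S)
  (x : option (Q + Q)) (s : S) : option (Q + Q) :=
  match x with
  | None => None
  | Some (inl q) => Some (inl (t q s))
  | Some (inr q) => Some (inr (t q (oi o q s)))
  end.

Definition oE (S : finType) (Q : Type) (o : Q -> S -> S)
  (x : option (Q + Q)) (s : S) : seq S :=
  match x with
  | None => [:: s]
  | Some (inl q) => [:: o q s]
  | Some (inr q) => [:: oi o q s]
  end.

Lemma oiK (S : finType) (Q : Type) (o : Q -> S -> S) (hb : forall q, bijective (o q)) q :
  cancel (o q) (oi o q) /\ cancel (oi o q) (o q).
Proof.
have h2 : cancel (oi o q) (o q).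
  move=> s; rewrite /oi; case: pickP => [x /eqP //|H].
  case: (hb q) => g _ gK; move: (H (g s)); by rewrite gK eqxx.
split => // s.
by apply: (bij_inj (hb q)); rewrite h2.
Qed.


Lemma actL (S : finType) (Q : Type) (t : Q -> S -> Q) (o : Q -> S -> S) q w :
  exp_act (tE t o) (oE o) (Some (inl q)) w = sync_act t o q w.
Proof. by elim: w q => //= s w IH q; rewrite IH. Qed.

Lemma actN (S : finType) (Q : Type) (t : Q -> S -> Q) (o : Q -> S -> S) w :
  exp_act (tE t o) (oE o) None w = w.
Proof. by elim: w => //= s w ->. Qed.

Lemma actR (S : finType) (Q : Type) (t : Q -> S -> Q) (o : Q -> S -> S)
  (hb : forall q, bijective (o q)) q :
  cancel (sync_act t o q) (exp_act (tE t o) (oE o) (Some (inr q))) /\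
  cancel (exp_act (tE t o) (oE o) (Some (inr q))) (sync_act t o q).
Proof.
split.
- move=> w; elim: w q => //= s w IH q.
  have [h1 h2] := oiK hb q. by rewrite /= h1 IH.
- move=> w; elim: w q => //= s w IH q.
  have [h1 h2] := oiK hb q. rewrite /sync_act /= h2. by rewrite -[exp_act _ _ (t q _) _]/(sync_act t o _ _) IH.
Qed.

Lemma dir1 (S : finType) (Q : Type) (t : Q -> S -> Q) (o : Q -> S -> S)
  (hb : forall q, bijective (o q)) (G : Type) (mul : G -> G -> G) :
  iso_to_maps mul (ggen (fun f => exists q, f = sync_act t o q)) ->
  iso_to_maps mul (sgen (fun f => exists q, f = exp_act (tE t o) (oE o) q)).
Proof.
have sb : forall x, sgen (fun f => exists q, f = exp_act (tE t o) (oE o) q) (exp_act (tE t o) (oE o) x).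
  by move=> x; apply: sgen_base; exists x.
have gb : forall q, ggen (fun f => exists q, f = sync_act t o q) (sync_act t o q).
  by move=> q; apply: ggen_base; exists q.
apply: iso_transfer.
- move=> f H.
  suff : sgen (fun f => exists q, f = exp_act (tE t o) (oE o) q) f /\
    exists g, sgen (fun f => exists q, f = exp_act (tE t o) (oE o) q) g /\ cancel f g /\ cancel g f by case.
  elim: H => {f}.
  + move=> f [q ->]; split.
      apply: sgen_ext (sb (Some (inl q))) _.
      by move=> w; rewrite actL.
    exists (exp_act (tE t o) (oE o) (Some (inr q))); split; last exact: actR.
    exact: sb.
  + split.
      apply: sgen_ext (sb None) _.
      by move=> w; rewrite actN.
    exists id; split => //.
    apply: sgen_ext (sb None) _.
    by move=> w; rewrite actN.
  + move=> f g _ [Hf [f' [Hf' [c1 c2]]]] _ [Hg [g' [Hg' [c3 c4]]]]; split.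
      exact: sgen_comp.
    exists (g' \o f'); split; first exact: sgen_comp.
    by split => x /=; rewrite ?c1 ?c3 ?c2 ?c4.
  + move=> f g _ [Hf [h [Hh [c1 c2]]]] c3 c4; split.
      apply: sgen_ext Hh _ => x. by rewrite -{2}(c2 x) c3.
    exists f; split => // x.
  + move=> f g _ [Hf [h [Hh [c1 c2]]]] e; split.
      exact: sgen_ext Hf e.
    exists h; split; first done.
    by split=> x; rewrite -?e ?c1 ?c2.
- move=> f; elim => {f}.
  + move=> f [[[q|q]|] ->].
    * apply: ggen_ext (gb q) _.
      by move=> w; rewrite actL.
    * have [c1 c2] := actR t hb q.
      exact: ggen_inv (gb q) c1 c2.
    * apply: ggen_ext (ggen_id _) _ => w; by rewrite actN.
  + by move=> f g _ Hf _ Hg; apply: ggen_comp.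
  + by move=> f g _ Hf e; apply: ggen_ext Hf e.
Qed.

Lemma sgen_props (S : Type) (Q : Type) (t : Q -> S -> Q) (o : Q -> S -> seq S)
  (ho : forall q s, o q s <> [::]) f :
  sgen (fun f => exists q, f = exp_act t o q) f ->
  [/\ f [::] = [::], (forall w, size w <= size (f w)) &
      forall u, exists f', sgen (fun f => exists q, f = exp_act t o q) f' /\
         forall w, f (u ++ w) = f u ++ f' w].
Proof.
elim => {f}.
- move=> f [q ->]; split => //.
  + move=> w; elim: w q => // s w IH q /=; rewrite size_cat.
    case E: (o q s) => [|x xs]; first by case: (ho q s).
    by rewrite /= addSn ltnS (leq_trans (IH (t q s))) // leq_addl.
  + move=> u; elim: u q => [|s u IH] q /=.
      by exists (exp_act t o q); split => //; apply: sgen_base; exists q.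
    have [f' [Hf' E]] := IH (t q s); exists f'; split => // w.
    by rewrite E catA.
- move=> f g _ [f0 fs fu] _ [g0 gs gu]; split.
  + by rewrite /= g0 f0.
  + by move=> w /=; apply: leq_trans (gs w) (fs _).
  + move=> u; have [g' [Hg' Eg]] := gu u; have [f' [Hf' Ef]] := fu (g u).
    exists (f' \o g'); split; first exact: sgen_comp.
    by move=> w /=; rewrite Eg Ef.
- move=> f g _ [f0 fs fu] e; split.
  + by rewrite -e.
  + by move=> w; rewrite -e.
  + move=> u; have [f' [Hf' Ef]] := fu u; exists f'; split => // w.
    by rewrite -!e.
Qed.

Lemma group_facts (G : Type) (mul : G -> G -> G) one inv (hG : is_group mul one inv) :
  (forall x, mul x (inv x) = one) /\ (forall x, mul x one = x).
Proof.
case: hG => A L I.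
have R : forall x, mul x (inv x) = one.
  move=> x.
  by rewrite -[mul x _]L -(I (inv x)) -A (A (inv x)) I L I.
split => // x; by rewrite -(I x) A R L.
Qed.

Lemma dir2 (S : finType) (Q : Type) (t : Q -> S -> Q) (o : Q -> S -> seq S)
  (ho : forall q s, o q s <> [::]) (G : Type) (mul : G -> G -> G) one inv
  (hG : is_group mul one inv) :
  iso_to_maps mul (sgen (fun f => exists q, f = exp_act t o q)) ->
  exists (A : finType) (t' : Q -> A -> Q) (o' : Q -> A -> A),
    (forall q, bijective (o' q)) /\
    iso_to_maps mul (ggen (fun f => exists q, f = sync_act t' o' q)).
Proof.
set M := sgen _.
move=> [phi [pM psurj pinj phom]].
have [gA gL gI] := hG.
have [gR gR1] := group_facts hG.
pose e := phi one.
have eL : forall g w, e (phi g w) = phi g w.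
  by move=> g w; rewrite /e -[phi one (phi g w)]/((phi one \o phi g) w) -phom gL.
have eR : forall g w, phi g (e w) = phi g w.
  by move=> g w; rewrite /e -[phi g (phi one w)]/((phi g \o phi one) w) -phom gR1.
have Iv : forall g w, phi (inv g) (phi g w) = e w.
  by move=> g w; rewrite -[phi (inv g) (phi g w)]/((phi (inv g) \o phi g) w) -phom gI.
have ee : forall w, e (e w) = e w by move=> w; apply: eL.
have Mphi : forall g, M (phi g) by [].
have idem : forall f, M f -> (forall w, f (f w) = f w) -> forall w, f w = e w.
  move=> f Mf H w; have [g Eg] := psurj f Mf.
  have gg : mul g g = g.
    apply: pinj => x; rewrite phom /= !Eg; exact: H.
  have g1 : g = one by rewrite -(gI g) -{3}gg gA gI gL.
  by rewrite -Eg g1.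
have [e0 es esec] := sgen_props ho (Mphi one).
rewrite -/e in e0 es esec.
pose pA := fun s : S => e [:: s] == [:: s].
have e_cons : forall s, pA s -> forall w, e (s :: w) = s :: e w.
  move=> s /eqP Es.
  have [e' [Me' Ee']] := esec [:: s].
  have Ec : forall w, e (s :: w) = s :: e' w.
    by move=> w; have := Ee' w; rewrite cat1s Es.
  have : forall w, e' (e' w) = e' w.
    by move=> w; have := ee (s :: w); rewrite !Ec => -[].
  by move/(idem _ Me') => H w; rewrite Ec H.
have e_fixA : forall w, all pA w -> e w = w.
  by elim=> // s w IH /= /andP [hs hw]; rewrite e_cons // IH.
have e_fixinv : forall w, e w = w -> all pA w.
  elim=> // s w IH Ew.
  have [e' [Me' Ee']] := esec [:: s].
  have [_ es' _] := sgen_props ho Me'.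
  have := Ee' w; rewrite cat1s Ew.
  case Es: (e [:: s]) => [|y x]; first by have := es [:: s]; rewrite Es.
  case=> Ey Ex; subst y.
  have x0 : x = [::].
    have := ee [:: s]; rewrite Es -cat1s Ee' Es.
    move/(congr1 size); rewrite /= size_cat => /eqP; rewrite eqSS -{2}[size x]addn0 eqn_add2l size_eq0 => /eqP ex.
    by have := es' x; rewrite ex leqn0 size_eq0 => /eqP.
  have hs : pA s by rewrite /pA Es x0.
  rewrite /= hs IH //.
  by have := Ew; rewrite e_cons // => -[].
have imgA : forall g w, all pA (phi g w) := fun g w => e_fixinv _ (eL g w).
have lenA : forall g w, all pA w -> size (phi g w) = size w.
  move=> g w hw; apply/eqP; rewrite eqn_leq.
  have [_ s1 _] := sgen_props ho (Mphi g); have [_ s2 _] := sgen_props ho (Mphi (inv g)).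
  rewrite s1 andbT. by have := s2 (phi g w); rewrite Iv e_fixA.
have stq : forall q, exists g, phi g =1 exp_act t o q.
  by move=> q; apply: psurj; apply: sgen_base; exists q.
have oA : forall q s, pA s -> exists2 b, pA b & o q s = [:: b].
  move=> q s hs; have [g Eg] := stq q.
  have h1 : size (phi g [:: s]) = size [:: s] by apply: lenA; rewrite /= hs.
  have h2 := imgA g [:: s].
  rewrite Eg /= cats0 in h1 h2.
  move: h1 h2; case: (o q s) => [|b [|c l]] //= _ /andP [hb _].
  by exists b.
pose A := {s : S | pA s}.
pose t' := fun q (a : A) => t q (val a).
pose o' := fun q (a : A) => insubd a (head (val a) (o q (val a))) : A.
have o'E : forall q (a : A), o q (val a) = [:: val (o' q a)].
  move=> q a; have [b hb E] := oA q (val a) (valP a).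
  by rewrite /o' E /= insubdK.
have actE : forall q (w : seq A), map val (sync_act t' o' q w) = exp_act t o q (map val w).
  move=> q w; elim: w q => //= a w IH q.
  by rewrite o'E /= -IH.
exists A, t', o'; split.
  move=> q; apply: injF_bij => a b E.
  have [g Eg] := stq q.
  have Ex : forall x, phi g [:: val x] = [:: val (o' q x)].
    by move=> x; rewrite Eg /= o'E.
  have := Iv g [:: val a]; rewrite Ex E -Ex Iv.
  rewrite (e_fixA [:: val a]) ?(e_fixA [:: val b]) /= ?andbT ?(valP a) ?(valP b) // => -[] /val_inj.
  done.
have allv : forall w : seq A, all pA (map val w).
  by move=> w; apply/allP => x /mapP [a _ ->]; exact: valP.
have pmK : forall x, all pA x -> map val (pmap insub x : seq A) = x.
  elim=> //= s x IH /andP [hs hx].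
  case: insubP => [u _ Eu|]; first by rewrite /= Eu IH.
  by rewrite hs.
pose psi := fun g (w : seq A) => pmap insub (phi g (map val w)) : seq A.
have psiE : forall g w, map val (psi g w) = phi g (map val w).
  by move=> g w; rewrite pmK.
have vinj : injective (map val : seq A -> seq S) by apply: inj_map; apply: val_inj.
have psihom : forall g h, psi (mul g h) =1 psi g \o psi h.
  move=> g h w; apply: vinj; change (map val (psi (mul g h) w) = map val (psi g (psi h w))).
  by rewrite !psiE (phom g h (map val w)).
exists psi; split.
- move=> g.
  suff : forall f, M f -> forall g, phi g =1 f ->
    ggen (fun f => exists q, f = sync_act t' o' q) (psi g) by apply; [apply: Mphi|].
  move=> f; elim => {f g}.
  + move=> f [q ->] g Eg.
    apply: (@ggen_ext _ _ (sync_act t' o' q)); first by apply: ggen_base; exists q.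
    by move=> w; apply: vinj; rewrite actE psiE Eg.
  + move=> f1 f2 M1 IH1 M2 IH2 g Eg.
    have [g1 E1] := psurj _ M1; have [g2 E2] := psurj _ M2.
    have -> : g = mul g1 g2 by apply: pinj => w; rewrite Eg (phom g1 g2 w) /= E1 E2.
    apply: ggen_ext (ggen_comp (IH1 _ E1) (IH2 _ E2)) _ => w; by rewrite psihom.
  + move=> f1 f2 M1 IH E g Eg.
    apply: IH => w; by rewrite Eg E.
- move=> f; elim => {f}.
  + move=> f [q ->]; have [g Eg] := stq q; exists g => w.
    by apply: vinj; rewrite actE psiE Eg.
  + exists one => w; apply: vinj; rewrite psiE.
    by rewrite -/e e_fixA.
  + move=> f1 f2 _ [g1 E1] _ [g2 E2]; exists (mul g1 g2) => w.
    by rewrite psihom /= E2 E1.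
  + move=> f1 f2 _ [g E] c1 c2; exists (inv g) => w.
    have H : forall x, psi (inv g) (psi g x) = x.
      move=> x; apply: vinj; rewrite !psiE Iv; exact: e_fixA.
    by rewrite -{1}(c2 w) -E H.
  + move=> f1 f2 _ [g E] E'; exists g => w; by rewrite E.
- move=> g h Egh; apply: pinj => w.
  rewrite -eR -(eR h) -(pmK (e w) (imgA one w)) -!psiE.
  by rewrite Egh.
- exact: psihom.
Qed.

Theorem mainTheorem10 (G : Type) (mul : G -> G -> G) (one : G) (inv : G -> G)
    (hG : is_group mul one inv) :
  (iso_automaton_group mul <-> iso_expanding_automaton_semigroup mul) /\
  (iso_self_similar_group mul <-> iso_expanding_self_similar_semigroup mul).
Proof.
split; split.
- move=> [S [Q [t [o [hb H]]]]].
  exists S, (option (Q + Q) : finType), (tE t o), (oE o); split.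
    by move=> [[q|q]|] s.
  exact (dir1 hb H).
- move=> [S [Q [t [o [ho H]]]]].
  have [A [t' [o' [hb H']]]] := dir2 ho hG H.
  by exists A, Q, t', o'.
- move=> [S [Q [t [o [hb H]]]]].
  exists S, (option (Q + Q)), (tE t o), (oE o); split.
    by move=> [[q|q]|] s.
  exact (dir1 hb H).
- move=> [S [Q [t [o [ho H]]]]].
  have [A [t' [o' [hb H']]]] := dir2 ho hG H.
  by exists A, Q, t', o'.
Qed.
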